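(* Consider the equation $g(x,y)=1$ with $y\ge x\ge0$. (i) The maximum value of $x$ among its solutions is $x_{\max}=-1/\log(2q)=\lambda_0$, and the maximum value of $y$ among its solutions is $y_{\max}=-1/\log(q(1+2p))=:\kappa_0$. (ii) If $x=x_{\max}$ then $y=-1/(p\log(2q))$. If $y=y_{\max}=\kappa_0$ then $x=2\kappa_0p/(2p+1)$. If $x=0$ then $y=-1/\log q$. (iii) For given $x$, the equation has exactly one solution in $y$ for $0\le x<-1/\log(2pq)$ and for $x=\lambda_0$, and exactly two solutions in $y$ for $-1/\log(2pq)\le x<\lambda_0$.
   Context: Let $0<q<p<1$ with $p+q=1$, and $g(x,y)=x\log x-y\log y+(y-x)\log(y-x)-x\log(2p)-y\log q$ for $y\ge x\ge0$, with the convention $0\log0=0$. *)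

(* Defs.v *)
From Stdlib Require Import Reals.
Open Scope R_scope.

Definition xlogx (t : R) : R := if Req_EM_T t 0 then 0 else t * ln t.

Definition g (p q x y : R) : R :=
  xlogx x - xlogx y + xlogx (y - x) - x * ln (2 * p) - y * ln q.

Definition sol (p q x y : R) : Prop := 0 <= x /\ x <= y /\ g p q x y = 1.

(* Main.v *)
Require Import Defs.
From Stdlib Require Import Reals Lra Ranalysis5.
From Coquelicot Require Import Coquelicot.
Open Scope R_scope.

Lemma xlogx_eq t : xlogx t = t * ln t.
Proof. unfold xlogx. destruct (Req_EM_T t 0); [subst; ring | reflexivity]. Qed.

Definition hf (p q x y : R) := x*ln x - y*ln y + (y-x)*ln(y-x) - x*ln(2*p) - y*ln q.

Lemma g_eq p q x y : g p q x y = hf p q x y.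
Proof. unfold g, hf. rewrite !xlogx_eq. reflexivity. Qed.

Lemma ln_le_sub1 t : 0 < t -> ln t <= t - 1.
Proof. intros. pose proof (exp_ineq1_le (ln t)). rewrite exp_ln in H0; lra. Qed.

Lemma ln_lt_sub1 t : 0 < t -> t <> 1 -> ln t < t - 1.
Proof.
  intros. assert (ln t <> 0).
  { intro E. apply H0. rewrite <- (exp_ln t H), E. apply exp_0. }
  pose proof (exp_ineq1 (ln t) H1). rewrite exp_ln in H2; lra.
Qed.

Lemma phi_ge u v : 0 < u -> 0 <= v -> v - u <= v*ln v - v*ln u.
Proof.
  intros Hu Hv. destruct Hv as [Hv|Hv]; [|subst; lra].
  pose proof (ln_le_sub1 (u/v)) as H. rewrite ln_div in H by lra.
  assert (0 < u/v) by (apply Rdiv_lt_0_compat; lra).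
  specialize (H H0).
  apply Rmult_le_compat_l with (r := v) in H; [|lra].
  replace (v * (u/v - 1)) with (u - v) in H by (field; lra). nra.
Qed.

Lemma phi_gt u v : 0 < u -> 0 <= v -> v <> u -> v - u < v*ln v - v*ln u.
Proof.
  intros Hu Hv Hne. destruct Hv as [Hv|Hv]; [|subst; lra].
  assert (0 < u/v) by (apply Rdiv_lt_0_compat; lra).
  assert (u/v <> 1).
  { intro E. apply Hne. assert (u = v * (u/v)) by (field; lra). rewrite E in H0. lra. }
  pose proof (ln_lt_sub1 (u/v) H H0) as H1. rewrite ln_div in H1 by lra.
  apply Rmult_lt_compat_l with (r := v) in H1; [|lra].
  replace (v * (u/v - 1)) with (u - v) in H1 by (field; lra). nra.
Qed.

Section S.
Variables p q : R.
Hypothesis hq : 0 < q.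
Hypothesis hqp : q < p.
Hypothesis hpq : p + q = 1.

Lemma idA x y : 0 < y ->
  hf p q x y + x * ln (2*q) =
  (x*ln x - x*ln (p*y)) + ((y-x)*ln(y-x) - (y-x)*ln(q*y)).
Proof.
  intros Hy. unfold hf. rewrite !ln_mult by lra. ring.
Qed.

Lemma A_ge x y : 0 <= x -> x <= y -> 0 < y -> - x * ln (2*q) <= hf p q x y.
Proof.
  intros. pose proof (idA x y H1).
  pose proof (phi_ge (p*y) x ltac:(nra) H).
  pose proof (phi_ge (q*y) (y-x) ltac:(nra) ltac:(lra)).
  assert (x - p*y + (y - x - q*y) = 0) by (replace q with (1-p) by lra; ring).
  lra.
Qed.

Lemma A_eq x y : 0 <= x -> x <= y -> 0 < y -> hf p q x y = - x * ln (2*q) -> x = p * y.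
Proof.
  intros. destruct (Req_dec x (p*y)) as [E|E]; [exact E|exfalso].
  pose proof (idA x y H1).
  pose proof (phi_gt (p*y) x ltac:(nra) H E).
  pose proof (phi_ge (q*y) (y-x) ltac:(nra) ltac:(lra)).
  assert (x - p*y + (y - x - q*y) = 0) by (replace q with (1-p) by lra; ring).
  lra.
Qed.

Lemma idB x y : 0 < y ->
  hf p q x y + y * ln (q*(1+2*p)) =
  (x*ln x - x*ln (2*p*y/(1+2*p))) + ((y-x)*ln(y-x) - (y-x)*ln(y/(1+2*p))).
Proof.
  intros Hy. unfold hf. rewrite !ln_div by nra. rewrite !ln_mult by nra. ring.
Qed.

Lemma B_ge x y : 0 <= x -> x <= y -> 0 < y -> - y * ln (q*(1+2*p)) <= hf p q x y.
Proof.
  intros. pose proof (idB x y H1).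
  assert (0 < 2*p*y/(1+2*p)) by (apply Rdiv_lt_0_compat; nra).
  assert (0 < y/(1+2*p)) by (apply Rdiv_lt_0_compat; nra).
  pose proof (phi_ge _ x H3 H).
  pose proof (phi_ge _ (y-x) H4 ltac:(lra)).
  assert (x - 2*p*y/(1+2*p) + (y - x - y/(1+2*p)) = 0) by (field; lra).
  lra.
Qed.

Lemma B_eq x y : 0 <= x -> x <= y -> 0 < y -> hf p q x y = - y * ln (q*(1+2*p)) ->
  x = 2*p*y/(1+2*p).
Proof.
  intros. pose proof (idB x y H1).
  assert (0 < 2*p*y/(1+2*p)) by (apply Rdiv_lt_0_compat; nra).
  assert (0 < y/(1+2*p)) by (apply Rdiv_lt_0_compat; nra).
  destruct (Req_dec x (2*p*y/(1+2*p))) as [E|E]; [exact E|exfalso].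
  pose proof (phi_gt _ x H4 H E).
  pose proof (phi_ge _ (y-x) H5 ltac:(lra)).
  assert (x - 2*p*y/(1+2*p) + (y - x - y/(1+2*p)) = 0) by (field; lra).
  lra.
Qed.

Lemma h_deriv x y : 0 < x -> x < y ->
  derivable_pt_lim (hf p q x) y (ln (y-x) - ln y - ln q).
Proof.
  intros. apply is_derive_Reals. unfold hf. auto_derive.
  - repeat split; lra.
  - unfold Rminus. field. split; lra.
Qed.

Lemma h_cont x y : 0 < x -> x < y -> continuity_pt (hf p q x) y.
Proof.
  intros. apply derivable_continuous_pt. exists (ln (y-x) - ln y - ln q).
  apply h_deriv; auto.
Qed.

Lemma dec_open x a b : 0 < x -> x < a -> a < b -> b <= x/p -> hf p q x b < hf p q x a.
Proof.
  intros. destruct (MVT_cor2 (hf p q x) (fun c => ln (c-x) - ln c - ln q) a b H1)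
    as [c [Hc1 Hc2]].
  { intros. apply h_deriv; lra. }
  assert (c * p < x).
  { assert (x/p*p = x) by (field; lra). nra. }
  assert (ln (c-x) < ln (q*c)) by (apply ln_increasing; nra).
  rewrite ln_mult in H4 by lra. nra.
Qed.

Lemma inc_open x a b : 0 < x -> x/p <= a -> a < b -> hf p q x a < hf p q x b.
Proof.
  intros. assert (x < x/p).
  { apply Rmult_lt_reg_r with p; [lra|]. replace (x/p*p) with x by (field; lra). nra. }
  destruct (MVT_cor2 (hf p q x) (fun c => ln (c-x) - ln c - ln q) a b H1)
    as [c [Hc1 Hc2]].
  { intros. apply h_deriv; lra. }
  assert (x < c * p).
  { assert (x/p*p = x) by (field; lra). nra. }
  assert (ln (q*c) < ln (c-x)) by (apply ln_increasing; nra).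
  rewrite ln_mult in H4 by lra. nra.
Qed.

Lemma dec_end x b : 0 < x -> x < b -> b <= x/p -> hf p q x b < hf p q x x.
Proof.
  intros. set (d := b - x).
  assert (E : hf p q x b - hf p q x x = -(b*ln b - x*ln x) + d*ln d - d*ln q).
  { unfold hf, d. replace (x - x) with 0 by ring. ring. }
  pose proof (phi_ge x b H ltac:(lra)).
  assert (Hd : d <= q*x/p).
  { unfold d. assert (x/p*p = x) by (field; lra).
    assert (q*x/p = x/p - x) by (replace q with (1-p) by lra; field; lra). lra. }
  assert (ln d <= ln (q*x/p)) by (apply ln_le; [unfold d; lra | exact Hd]).
  rewrite ln_div, ln_mult in H3 by nra.
  assert (- ln p < 1).
  { rewrite <- ln_Rinv by lra. pose proof (ln_le_sub1 (/p) ltac:(apply Rinv_0_lt_compat; lra)).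
    assert (/p < 2).
    { apply Rmult_lt_reg_r with p; [lra|]. rewrite Rinv_l by lra. lra. }
    lra. }
  assert (0 < d) by (unfold d; lra).
  assert (d * (ln d - ln x - ln q - 1) < 0).
  { assert (ln d - ln x - ln q - 1 < 0) by lra. nra. }
  assert (b*ln x - x*ln x = d*ln x) by (unfold d; ring). assert (b - x = d) by (unfold d; ring). nra.
Qed.

Lemma dec_closed x a b : 0 < x -> x <= a -> a < b -> b <= x/p -> hf p q x b < hf p q x a.
Proof.
  intros. destruct H0 as [H0|H0].
  - apply dec_open; auto.
  - subst a. apply dec_end; auto.
Qed.

Lemma near_x x e : 0 < x -> 0 < e -> exists a, x < a < x/p /\ hf p q x x - e < hf p q x a.
Proof.
  intros Hx He.
  set (s := Rmin (Rmin (1/2) (x*q/(2*p))) (e/(2*(x+3)))).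
  assert (Hs1 : s <= 1/2) by (unfold s; repeat apply Rmin_case_strong; intros; lra).
  assert (Hs2 : s <= x*q/(2*p)) by (unfold s; repeat apply Rmin_case_strong; intros; lra).
  assert (Hs3 : s <= e/(2*(x+3))) by (unfold s; repeat apply Rmin_case_strong; intros; lra).
  assert (Hs0 : 0 < s).
  { unfold s. repeat apply Rmin_case_strong; intros; try lra;
    apply Rdiv_lt_0_compat; nra. }
  set (d := s*s). set (a := x + d).
  exists a.
  assert (Hxp : x/p = x + x*q/p) by (replace q with (1-p) by lra; field; lra).
  assert (Hq2 : x*q/p = 2*(x*q/(2*p))) by (field; lra).
  assert (He2 : e = 2*(x+3) * (e/(2*(x+3)))) by (field; lra).
  split; [unfold a, d; split; nra|].
  assert (E : hf p q x a - hf p q x x = -(a*ln a - x*ln x) + d*ln d - d*ln q).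
  { unfold hf, a. replace (x - x) with 0 by ring. replace (x + d - x) with d by ring. ring. }
  assert (Ha : 0 < a) by (unfold a, d; nra).
  pose proof (phi_ge a x Ha ltac:(lra)) as P1.
  pose proof (ln_le_sub1 a Ha) as P2.
  assert (T1 : a*ln a - x*ln x <= d*a).
  { assert (a*ln a - x*ln x <= d * ln a + d) by (unfold a in *; nra).
    assert (0 < d) by (unfold d; nra). nra. }
  assert (T2 : - 2*s <= d * ln d).
  { unfold d. rewrite ln_mult by lra.
    pose proof (ln_le_sub1 (/s) ltac:(apply Rinv_0_lt_compat; lra)) as L.
    rewrite ln_Rinv in L by lra.
    assert (s * /s = 1) by (field; lra). nra. }
  assert (T3 : 0 <= - d * ln q).
  { assert (ln q < 0) by (rewrite <- ln_1; apply ln_increasing; lra).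
    unfold d; nra. }
  assert (d*a <= s*(x+1)).
  { unfold a, d. assert (s*s <= s) by nra. assert (s*s*(s*s) <= s) by nra.
    assert (s*s*x <= s*x) by nra. nra. }
  nra.
Qed.


Lemma x_lt_xp x : 0 < x -> x < x/p.
Proof.
  intros. apply Rmult_lt_reg_r with p; [lra|]. replace (x/p*p) with x by (field; lra). nra.
Qed.

Lemma hxx x : hf p q x x = - x * ln (2*p*q).
Proof.
  unfold hf. replace (x - x) with 0 by ring.
  rewrite (ln_mult (2*p) q) by lra. rewrite ln_mult by lra. ring.
Qed.

Lemma hmin x : 0 < x -> hf p q x (x/p) = - x * ln (2*q).
Proof.
  intros. assert (0 < x/p) by (apply Rdiv_lt_0_compat; lra).
  pose proof (idA x (x/p) H0).
  replace (p * (x/p)) with x in H1 by (field; lra).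
  replace (x/p - x) with (q*(x/p)) in H1 by (replace q with (1-p) by lra; field; lra).
  lra.
Qed.

Lemma hB_at y : 0 < y -> hf p q (2*p*y/(1+2*p)) y = - y * ln (q*(1+2*p)).
Proof.
  intros. pose proof (idB (2*p*y/(1+2*p)) y H).
  replace (y - 2*p*y/(1+2*p)) with (y/(1+2*p)) in H0 by (field; lra).
  lra.
Qed.

Lemma hzero y : hf p q 0 y = - y * ln q.
Proof. unfold hf. replace (y - 0) with y by ring. ring. Qed.

Lemma cont1 x a : 0 < x -> x < a -> continuity_pt (fun y => hf p q x y - 1) a.
Proof.
  intros. apply (continuity_pt_minus (hf p q x) (fct_cte 1)).
  - apply h_cont; lra.
  - apply continuity_pt_const. intros ? ?. reflexivity.
Qed.

Lemma cont2 x a : 0 < x -> x < a -> continuity_pt (fun y => 1 - hf p q x y) a.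
Proof.
  intros. apply (continuity_pt_minus (fct_cte 1) (hf p q x)).
  - apply continuity_pt_const. intros ? ?. reflexivity.
  - apply h_cont; lra.
Qed.

Lemma big_root x : 0 < x -> - x * ln (2*q) < 1 -> exists y, x/p < y /\ hf p q x y = 1.
Proof.
  intros Hx H1.
  assert (Lk : ln (q*(1+2*p)) < 0).
  { rewrite <- ln_1; apply ln_increasing; [nra|].
    replace p with (1-q) by lra. nra. }
  pose proof (x_lt_xp x Hx) as Hxp.
  set (K := - / ln (q*(1+2*p))).
  assert (HK : K * (- ln (q*(1+2*p))) = 1) by (unfold K; field; lra).
  set (Y := Rmax K (x/p) + 1).
  assert (HY1 : K < Y) by (unfold Y; pose proof (Rmax_l K (x/p)); lra).
  assert (HY2 : x/p < Y) by (unfold Y; pose proof (Rmax_r K (x/p)); lra).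
  assert (HhY : 1 < hf p q x Y).
  { pose proof (B_ge x Y ltac:(lra) ltac:(lra) ltac:(lra)). nra. }
  destruct (IVT_interv (fun y => hf p q x y - 1) (x/p) Y) as [z [Hz1 Hz2]].
  - intros. apply cont1; lra.
  - exact HY2.
  - rewrite hmin by lra. lra.
  - lra.
  - exists z. split; [|lra]. destruct Hz1 as [[Hz|Hz] _]; [exact Hz|].
    subst z. rewrite hmin in Hz2 by lra. lra.
Qed.

Lemma small_root x : 0 < x -> 1 < hf p q x x -> - x * ln (2*q) < 1 ->
  exists y, x < y < x/p /\ hf p q x y = 1.
Proof.
  intros Hx H1 H2.
  destruct (near_x x (hf p q x x - 1) Hx ltac:(lra)) as [a [Ha1 Ha2]].
  destruct (IVT_interv (fun y => 1 - hf p q x y) a (x/p)) as [z [Hz1 Hz2]].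
  - intros. apply cont2; lra.
  - lra.
  - lra.
  - rewrite hmin by lra. lra.
  - exists z. split; [|lra]. split; [lra|]. destruct Hz1 as [_ [Hz|Hz]]; [exact Hz|].
    subst z. rewrite hmin in Hz2 by lra. lra.
Qed.

Lemma uniq_inc x y y' : 0 < x -> x/p <= y -> x/p <= y' -> hf p q x y = 1 -> hf p q x y' = 1 -> y = y'.
Proof.
  intros. destruct (Rtotal_order y y') as [H4|[H4|H4]]; auto.
  - pose proof (inc_open x y y' H H0 H4). lra.
  - pose proof (inc_open x y' y H H1 H4). lra.
Qed.

Lemma uniq_dec x y y' : 0 < x -> x <= y <= x/p -> x <= y' <= x/p -> hf p q x y = 1 -> hf p q x y' = 1 -> y = y'.
Proof.
  intros. destruct (Rtotal_order y y') as [H4|[H4|H4]]; auto.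
  - pose proof (dec_closed x y y' H ltac:(lra) H4 ltac:(lra)). lra.
  - pose proof (dec_closed x y' y H ltac:(lra) H4 ltac:(lra)). lra.
Qed.

End S.

Theorem lemma6p2 (p q : R) (hq : 0 < q) (hqp : q < p) (hp : p < 1)
  (hpq : p + q = 1) :
  let lambda0 := - / ln (2 * q) in
  let kappa0 := - / ln (q * (1 + 2 * p)) in
  let x1 := - / ln (2 * p * q) in
  (* (i) maximal x and maximal y among solutions *)
  ((exists y, sol p q lambda0 y) /\ (forall x y, sol p q x y -> x <= lambda0)) /\
  ((exists x, sol p q x kappa0) /\ (forall x y, sol p q x y -> y <= kappa0)) /\
  (* (ii) the corresponding other coordinates *)
  (forall y, sol p q lambda0 y -> y = - / (p * ln (2 * q))) /\
  (forall x, sol p q x kappa0 -> x = 2 * kappa0 * p / (2 * p + 1)) /\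
  (forall y, sol p q 0 y -> y = - / ln q) /\
  (* (iii) number of solutions in y for given x *)
  (forall x, (0 <= x < x1 \/ x = lambda0) ->
     exists y, sol p q x y /\ forall y', sol p q x y' -> y' = y) /\
  (forall x, x1 <= x < lambda0 ->
     exists y1 y2, y1 < y2 /\ sol p q x y1 /\ sol p q x y2 /\
       forall y', sol p q x y' -> y' = y1 \/ y' = y2).
Proof.
  intros lambda0 kappa0 x1.
  pose proof (x_lt_xp p q) as x_lt_xp'.
  pose proof (hmin p q) as hmin'.
  pose proof (hxx p q) as hxx'.
  pose proof (hzero p q) as hzero'.
  pose proof (hB_at p q) as hB_at'.
  pose proof (A_ge p q) as A_ge'.
  pose proof (A_eq p q) as A_eq'.
  pose proof (B_ge p q) as B_ge'.
  pose proof (B_eq p q) as B_eq'.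
  pose proof (big_root p q) as big_root'.
  pose proof (small_root p q) as small_root'.
  pose proof (dec_end p q) as dec_end'.
  pose proof (uniq_inc p q) as uniq_inc'.
  pose proof (uniq_dec p q) as uniq_dec'.
  repeat match goal with H : 0 < q -> _ |- _ => specialize (H hq) end.
  repeat match goal with H : q < p -> _ |- _ => specialize (H hqp) end.
  repeat match goal with H : p + q = 1 -> _ |- _ => specialize (H hpq) end.
  assert (hp0 : 0 < p) by lra.
  assert (L2q : ln (2*q) < 0) by (rewrite <- ln_1; apply ln_increasing; lra).
  assert (Lk : ln (q*(1+2*p)) < 0).
  { rewrite <- ln_1; apply ln_increasing; [nra|].
    replace p with (1-q) by lra. nra. }
  assert (Lpq : ln (2*p*q) < ln (2*q)) by (apply ln_increasing; nra).
  assert (Lq : ln q < 0) by (rewrite <- ln_1; apply ln_increasing; lra).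
  assert (HL : lambda0 * (- ln (2*q)) = 1) by (unfold lambda0; field; lra).
  assert (HK : kappa0 * (- ln (q*(1+2*p))) = 1) by (unfold kappa0; field; lra).
  assert (HX : x1 * (- ln (2*p*q)) = 1) by (unfold x1; field; lra).
  assert (Ey : - / (p * ln (2*q)) = lambda0 / p) by (unfold lambda0; field; lra).
  rewrite Ey. clearbody lambda0 kappa0 x1.
  assert (lam_pos : 0 < lambda0) by nra.
  assert (kap_pos : 0 < kappa0) by nra.
  assert (x1_pos : 0 < x1) by nra.
  assert (x1_lt : x1 < lambda0) by nra.
  assert (ypos : forall x y, sol p q x y -> 0 < y).
  { intros x y [H1 [H2 H3]]. destruct (Rle_or_lt y 0) as [H|H]; [|exact H].
    assert (x = 0) by lra. assert (y = 0) by lra. subst.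
    rewrite g_eq, hzero' in H3. lra. }
  assert (solE : forall x y, sol p q x y <-> 0 <= x /\ x <= y /\ hf p q x y = 1).
  { intros. unfold sol. rewrite g_eq. tauto. }
  assert (lamp : lambda0 < lambda0 / p).
  { apply x_lt_xp'; lra. }
  assert (PA1 : sol p q lambda0 (lambda0/p)).
  { apply solE. split; [lra|split; [lra|]]. rewrite hmin' by lra. lra. }
  assert (PA2 : forall y, sol p q lambda0 y -> y = lambda0 / p).
  { intros y Hs. pose proof (ypos _ _ Hs). apply solE in Hs. destruct Hs as [H1 [H2 H3]].
    pose proof (A_eq' lambda0 y H1 H2 H ltac:(lra)). rewrite H0. field; lra. }
  assert (P0 : forall y, sol p q 0 y -> y = - / ln q).
  { intros y Hs. apply solE in Hs. destruct Hs as [H1 [H2 H3]]. rewrite hzero' in H3.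
    replace y with ((y * ln q) * / ln q) by (field; lra).
    replace (y * ln q) with (-1) by lra. field; lra. }
  split; [split|split; [split|]].
  - exists (lambda0/p); exact PA1.
  - intros x y Hs. pose proof (ypos _ _ Hs). apply solE in Hs. destruct Hs as [H1 [H2 H3]].
    pose proof (A_ge' x y H1 H2 H). nra.
  - exists (2*p*kappa0/(1+2*p)). apply solE.
    assert (2*p*kappa0/(1+2*p) * (1+2*p) = 2*p*kappa0) by (field; lra).
    split; [|split]; [nra|nra|]. rewrite hB_at' by lra. lra.
  - intros x y Hs. pose proof (ypos _ _ Hs). apply solE in Hs. destruct Hs as [H1 [H2 H3]].
    pose proof (B_ge' x y H1 H2 H). nra.
  - split; [exact PA2|]. split.
    { intros x Hs. pose proof (ypos _ _ Hs). apply solE in Hs. destruct Hs as [H1 [H2 H3]].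
      pose proof (B_eq' x kappa0 H1 H2 H ltac:(lra)). rewrite H0. field; lra. }
    split; [exact P0|]. split.
    + intros x [[Hx0 Hx1]|Hx].
      * destruct Hx0 as [Hx0|Hx0].
        -- assert (- x * ln (2*q) < 1) by nra.
           destruct (big_root' x Hx0 H) as [y [Hy1 Hy2]].
           pose proof (x_lt_xp' x Hx0).
           exists y. split; [apply solE; split; [lra|split; [lra|exact Hy2]]|].
           intros y' Hs. apply solE in Hs. destruct Hs as [H1 [H2 H3]].
           destruct (Rlt_or_le y' (x/p)) as [Hy'|Hy'].
           ++ exfalso. assert (hf p q x x < 1) by (rewrite hxx'; nra).
              destruct H2 as [H2|H2].
              ** pose proof (dec_end' x y' Hx0 H2 ltac:(lra)). lra.
              ** subst y'. lra.
           ++ apply (uniq_inc' x); auto; lra.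
        -- subst x. exists (- / ln q). split; [|exact P0].
           apply solE. assert (0 < - / ln q).
           { replace (- / ln q) with (/ - ln q) by (field; lra).
             apply Rinv_0_lt_compat; lra. }
           split; [lra|split; [lra|]]. rewrite hzero'. field; lra.
      * subst x. exists (lambda0/p). split; [exact PA1|exact PA2].
    + intros x [Hx1 Hx2].
      assert (Hx0 : 0 < x) by lra.
      assert (Hm : - x * ln (2*q) < 1) by nra.
      pose proof (x_lt_xp' x Hx0) as Hxp.
      destruct (big_root' x Hx0 Hm) as [y2 [Hy21 Hy22]].
      assert (exists y1, x <= y1 < x/p /\ hf p q x y1 = 1) as [y1 [Hy11 Hy12]].
      { destruct Hx1 as [Hx1|Hx1].
        - assert (1 < hf p q x x) by (rewrite hxx'; nra).
          destruct (small_root' x Hx0 H Hm) as [y [Hy1 Hy2]].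
          exists y; split; [lra|exact Hy2].
        - subst x1. exists x. split; [lra|]. rewrite hxx'. lra. }
      exists y1, y2. split; [lra|]. split; [apply solE; split; [lra|split; [lra|exact Hy12]]|].
      split; [apply solE; split; [lra|split; [lra|exact Hy22]]|].
      intros y' Hs. apply solE in Hs. destruct Hs as [H1 [H2 H3]].
      destruct (Rle_or_lt y' (x/p)) as [Hy'|Hy'].
      * left. apply (uniq_dec' x); auto; lra.
      * right. apply (uniq_inc' x); auto; lra.
Qed.
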